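(* Let $G=(V,E)$ be a connected graph, $s\in V$, $\mathcal{T}$ the layering tree of $G$ with respect to $s$, and $\ell\ge \ell(\mathcal{T})$ an integer. Suppose $u,v\in V$ belong to the same part $P$ of $\mathcal{T}$ at layer $k$. Then there is a $u$-$v$ path in $G$ all of whose vertices lie in $L_{\ge k}\cap L_{\le k+\ell+1}$; i.e. $u$ and $v$ are connected in $G\setminus(L_{\le k-1}\cup L_{\ge k+\ell+2})$.
   Context: For a connected graph $G$ and root $s\in V(G)$, the BFS layers are $L_i=\{v: d_G(s,v)=i\}$ for $i\ge 0$, with $L_{\le k}=L_0\cup\dots\cup L_k$, $L_{\ge k}=\bigcup_{j\ge k}L_j$, $L_{-1}=\emptyset$. For each $i\ge 0$, let $S_i^1,\dots,S_i^{s_i}$ be the connected components of $G\setminus L_{\le i-1}$ (i.e. of $G[L_{\ge i}]$), and let $P_i^j=S_i^j\cap L_i$; the nonempty sets $P_i^j$ are the parts at layer (depth) $i$, and the set $\mathcal{P}$ of all parts over all layers partitions $V(G)$. The layering tree $\mathcal{T}=(\mathcal{P},\mathcal{E})$ has the parts as vertices, with $(P,P')\in\mathcal{E}$ iff some $u\in P$, $u'\in P'$ are adjacent in $G$. Its length is $\ell(\mathcal{T})=\max_{P\in\mathcal{P}}\max_{u,v\in P} d_G(u,v)$ (distances measured in $G$). *)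

(* Defs.v *)
From mathcomp Require Import all_boot.
Set Implicit Arguments. Unset Strict Implicit. Unset Printing Implicit Defensive.

(* A finite simple graph: vertex type T : finType, adjacency e : rel T
   (assumed symmetric and irreflexive in the theorem). *)

Definition walkb (T : finType) (e : rel T) (x y : T) (n : nat) : bool :=
  [exists p : n.-tuple T, path e x p && (last x p == y)].

(* Graph distance d_G(x,y): least n with a walk of length n from x to y.
   (Distances in a connected graph are < #|T|; the value #|T| is returned
   only when y is unreachable, which never happens for connected graphs.) *)
Definition dist (T : finType) (e : rel T) (x y : T) : nat :=
  find (walkb e x y) (iota 0 #|T|).

Definition band_rel (T : finType) (e : rel T) (s : T) (lo hi : nat) : rel T :=
  [rel a b | [&& e a b, lo <= dist e s a <= hi & lo <= dist e s b <= hi]].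

(* Adjacency of G[L_{>= i}] = G \ L_{<= i-1}. *)
Definition above_rel (T : finType) (e : rel T) (s : T) (i : nat) : rel T :=
  [rel a b | [&& e a b, i <= dist e s a & i <= dist e s b]].

(* x and y lie in the same part P_i^j of the layering tree at layer i:
   both are in L_i and in the same connected component of G[L_{>= i}]. *)
Definition same_part (T : finType) (e : rel T) (s : T) (i : nat) (x y : T) : bool :=
  [&& dist e s x == i, dist e s y == i & connect (above_rel e s i) x y].

Definition part_of (T : finType) (e : rel T) (s x : T) : {set T} :=
  [set y | same_part e s (dist e s x) x y].

Definition layering_length (T : finType) (e : rel T) (s : T) : nat :=
  \max_(x : T) \max_(y in part_of e s x) dist e x y.

(* Main.v *)
Require Import Defs.
From mathcomp Require Import all_boot zify.
Set Implicit Arguments. Unset Strict Implicit. Unset Printing Implicit Defensive.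

Lemma walkP (T : finType) (e : rel T) x y n :
  reflect (exists p : seq T, [/\ size p = n, path e x p & last x p = y]) (walkb e x y n).
Proof.
apply: (iffP existsP).
  by case=> p /andP[hp /eqP hl]; exists (val p); rewrite size_tuple.
case=> p [hs hp hl]; have hs' : size p == n by rewrite hs.
by exists (Tuple hs'); rewrite /= hp hl eqxx.
Qed.

Lemma walk_cat (T : finType) (e : rel T) x y z m n :
  walkb e x y m -> walkb e y z n -> walkb e x z (m + n).
Proof.
move=> /walkP[p [hs hp hl]] /walkP[q [hs' hq hl']]; apply/walkP.
exists (p ++ q); rewrite size_cat cat_path last_cat hl hp hq hs hs'; split=> //.
Qed.

Lemma walk_rev (T : finType) (e : rel T) (e_sym : symmetric e) x y n :
  walkb e x y n -> walkb e y x n.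
Proof.
move=> /walkP[p [hs hp hl]]; apply/walkP.
exists (rev (belast x p)); rewrite size_rev size_belast hs -hl rev_path; split=> //.
  by apply: sub_path hp => a b; rewrite e_sym.
case: p {hs hp hl} => [|z p] //=; rewrite rev_cons last_rcons //.
Qed.

Lemma walk1 (T : finType) (e : rel T) x y : e x y -> walkb e x y 1.
Proof. by move=> h; apply/walkP; exists [:: y]; rewrite /= h. Qed.

Lemma walk0 (T : finType) (e : rel T) x : walkb e x x 0.
Proof. by apply/walkP; exists [::]. Qed.

Lemma dist_le (T : finType) (e : rel T) x y n : walkb e x y n -> dist e x y <= n.
Proof.
move=> h; rewrite /dist; case: (ltnP n #|T|) => hn.
  have hh : has (walkb e x y) (iota 0 #|T|).
    by apply/hasP; exists n => //; rewrite mem_iota.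
  case: (ltnP n (find (walkb e x y) (iota 0 #|T|))) => // lt.
  by have := before_find 0 lt; rewrite nth_iota ?add0n ?h // (leq_trans lt) // -(size_iota 0 #|T|) find_size.
by apply: leq_trans hn; rewrite -{2}(size_iota 0 #|T|) find_size.
Qed.

Lemma dist_walk (T : finType) (e : rel T) (e_conn : forall x y : T, connect e x y) x y :
  walkb e x y (dist e x y).
Proof.
have [p hp hl] := connectP (e_conn x y).
subst y; case: (shortenP hp) => q hq uq _.
have hs : size q < #|T|.
  by have := card_uniqP uq; move=> /= <-; apply: max_card.
have hh : has (walkb e x (last x q)) (iota 0 #|T|).
  by apply/hasP; exists (size q); rewrite ?mem_iota //; apply/walkP; exists q; split.
have := nth_find 0 hh; rewrite nth_iota ?add0n //.
by move: hh; rewrite has_find size_iota.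
Qed.

Lemma dist_tri (T : finType) (e : rel T) (e_conn : forall x y : T, connect e x y) x y z :
  dist e x z <= dist e x y + dist e y z.
Proof. by apply: dist_le; apply: walk_cat; apply: dist_walk. Qed.

Lemma dist_sym (T : finType) (e : rel T) (e_sym : symmetric e)
  (e_conn : forall x y : T, connect e x y) x y : dist e x y = dist e y x.
Proof.
by apply/eqP; rewrite eqn_leq !dist_le // walk_rev // dist_walk.
Qed.

Lemma dist_edge (T : finType) (e : rel T) (e_conn : forall x y : T, connect e x y) s x y :
  e x y -> dist e s y <= dist e s x + 1.
Proof.
move=> h; apply: leq_trans (dist_tri e_conn s x y) _.
by rewrite leq_add2l; apply: dist_le; apply: walk1.
Qed.

Lemma neighbor (T : finType) (e : rel T) (e_sym : symmetric e)
  (e_conn : forall x y : T, connect e x y) s x n :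
  dist e s x = n.+1 -> exists z, dist e s z = n /\ e x z.
Proof.
move=> hx; have := walk_rev e_sym (dist_walk e_conn s x); rewrite hx.
case/walkP=> [[|z q] [//= [hs] /andP[hxz hq] hl]].
exists z; split=> //; apply/eqP; rewrite eqn_leq; apply/andP; split.
  by rewrite dist_sym //; apply: dist_le; apply/walkP; exists q.
have := dist_edge e_conn s (y:=x) (x:=z); rewrite e_sym hxz hx => /(_ isT).
by rewrite addn1 ltnS.
Qed.

Lemma path_band (T : finType) (e : rel T) s lo hi x p :
  path e x p -> all (fun w => lo <= dist e s w <= hi) (x :: p) ->
  connect (band_rel e s lo hi) x (last x p).
Proof.
elim: p x => [|y p IH] x /=; first by rewrite connect0.
case/andP=> hxy hp /and3P[hx hy hr].
have h1 : band_rel e s lo hi x y by rewrite /band_rel /= hxy hx hy.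
apply: connect_trans (connect1 h1) (IH _ hp _); by rewrite /= hy.
Qed.

Lemma connect_mono (T : finType) (r1 r2 : rel T) x y :
  (forall a b, r1 a b -> r2 a b) -> connect r1 x y -> connect r2 x y.
Proof.
move=> h; apply: connect_sub x y => a b /h; exact: connect1.
Qed.

Lemma descend (T : finType) (e : rel T) (e_sym : symmetric e)
  (e_conn : forall x y : T, connect e x y) s n : forall x j,
  dist e s x = n -> j <= n -> exists y, dist e s y = j /\ connect (band_rel e s j n) x y.
Proof.
elim: n => [|n IH] x j hx hj.
  by exists x; split; [move: hj; rewrite leqn0 hx => /eqP -> | exact: connect0].
case: (ltnP n j) => hjn.
  have -> : j = n.+1 by apply/eqP; rewrite eqn_leq hj hjn.
  by exists x; split; [ | exact: connect0].
have [z [hz hxz]] := neighbor e_sym e_conn hx.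
have [y [hy hc]] := IH z j hz hjn.
exists y; split=> //.
have h1 : band_rel e s j n.+1 x z.
  by rewrite /band_rel /= hxz hx hz hjn leqnn /=; apply/andP; split => //; rewrite ltnW.
apply: connect_trans (connect1 h1) (connect_mono _ hc).
move=> a b; rewrite /band_rel /= => /and3P[-> /andP[-> g1] /andP[-> g2]] /=.
by rewrite !(leq_trans _ (leqnSn n)).
Qed.

Lemma on_walk (T : finType) (e : rel T) a p w :
  path e a p -> w \in a :: p ->
  exists i, [/\ i <= size p, walkb e a w i & walkb e w (last a p) (size p - i)].
Proof.
move=> hp; rewrite inE; case/orP=> [/eqP->|hw].
  by exists 0; rewrite subn0 walk0; split=> //; apply/walkP; exists p.
case/splitPr: hw hp => p1 p2; rewrite cat_path /= => /and3P[h1 h2 h3].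
exists (size p1).+1; rewrite size_cat /= addnS ltnS leq_addr subSS; split=> //.
  by apply/walkP; exists (rcons p1 w); rewrite size_rcons last_rcons rcons_path h1 h2.
apply/walkP; exists p2; rewrite last_cat /= addKn; split=> //.
Qed.

Lemma csym (T : finType) (r : rel T) : symmetric r -> forall x y, connect r x y -> connect r y x.
Proof. by move=> h x y; rewrite (sym_connect_sym h). Qed.

Lemma above_sym (T : finType) (e : rel T) (e_sym : symmetric e) s i : symmetric (above_rel e s i).
Proof. by move=> a b; rewrite /above_rel /= e_sym; congr (_ && _); rewrite andbC. Qed.

Lemma band_sym (T : finType) (e : rel T) (e_sym : symmetric e) s lo hi : symmetric (band_rel e s lo hi).
Proof. by move=> a b; rewrite /band_rel /= e_sym; congr (_ && _); rewrite andbC. Qed.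

Lemma key (T : finType) (e : rel T) (e_sym : symmetric e)
  (e_conn : forall x y : T, connect e x y) s l (hl : layering_length e s <= l) k a b :
  dist e s a = k + l + 1 -> dist e s b = k + l + 1 ->
  connect (above_rel e s (k + l + 1)) a b -> connect (band_rel e s k (k + l + 1)) a b.
Proof.
set M := k + l + 1 => ha hb hab.
set h := l %/ 2; set j := M - h.
have hj : j <= M by rewrite leq_subr.
have hlh := divn_eq l 2; have hm := ltn_pmod l (isT : 0 < 2).
have [a' [ha' ca]] := descend e_sym e_conn ha hj.
have [b' [hb' cb]] := descend e_sym e_conn hb hj.
have bj : forall x y, band_rel e s j M x y -> above_rel e s j x y.
  by move=> x y; rewrite /band_rel /above_rel /= => /and3P[-> /andP[-> _] /andP[-> _]].
have sp : same_part e s j a' b'.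
  rewrite /same_part ha' hb' !eqxx /=.
  apply: connect_trans (csym (above_sym e_sym s j) (connect_mono bj ca)) _.
  apply: connect_trans (connect_mono _ hab) (connect_mono bj cb).
  move=> x y; rewrite /above_rel /= => /and3P[-> h1 h2].
  by rewrite (leq_trans hj h1) (leq_trans hj h2).
have dle : dist e a' b' <= l.
  apply: leq_trans hl; rewrite /layering_length.
  have HH := @leq_bigmax T (fun x => \max_(y in part_of e s x) dist e x y) a'.
  apply: leq_trans HH.
  by apply: (@leq_bigmax_cond T (fun y => y \in part_of e s a') (fun y => dist e a' y)); rewrite inE ha'.
have kb : forall x y, band_rel e s j M x y -> band_rel e s k M x y.
  move=> x y; rewrite /band_rel /= => /and3P[-> /andP[h1 ->] /andP[h2 ->]].
  by rewrite !andbT (leq_trans _ h1) ?(leq_trans _ h2) //; rewrite /j /M /h; lia.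
apply: connect_trans (connect_mono kb ca) _.
apply: connect_trans _ (csym (band_sym e_sym s k M) (connect_mono kb cb)).
have := dist_walk e_conn a' b'; case/walkP => p [hs hp hl'].
rewrite -hl'; have hp0 := hp; apply: path_band hp0 _; apply/allP => w hw.
have [i [hi w1 w2]] := on_walk hp hw.
rewrite hl' hs in w2 hi.
have u1 := dist_tri e_conn s a' w; have u2 := dist_tri e_conn s b' w.
have u3 := dist_tri e_conn s w a'; have u4 := dist_tri e_conn s w b'.
have v1 := dist_le w1; have v2 := dist_le w2.
rewrite (dist_sym e_sym e_conn b' w) in u2.
rewrite (dist_sym e_sym e_conn w a') in u3.
move: u1 u2 u3 u4 v1 v2 dle hi hlh hm; rewrite ha' hb' /j /M /h.
set D := dist e a' b'; set W := dist e s w; set A := dist e a' w; set B := dist e w b'.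
move=> *; apply/andP; split; lia.
Qed.

Theorem mainTheorem3 (T : finType) (e : rel T)
  (e_sym : symmetric e) (e_irr : irreflexive e)
  (e_conn : forall x y : T, connect e x y)
  (s : T) (l : nat) (hl : layering_length e s <= l)
  (k : nat) (u v : T) (huv : same_part e s k u v) :
  connect (band_rel e s k (k + l + 1)) u v.
Proof.
set M := k + l + 1.
pose P x y := if dist e s x <= M then y == x
              else (dist e s y == M) && connect (above_rel e s M) x y.
have exP : forall x, exists y, P x y.
  move=> x; case: (leqP (dist e s x) M) => hx; first by exists x; rewrite /P hx.
  have hx' : M <= dist e s x by rewrite ltnW.
  have [y [hy cy]] := descend e_sym e_conn (erefl (dist e s x)) hx'.
  exists y; rewrite /P leqNgt hx /= hy eqxx /=; apply: connect_mono cy.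
  by move=> a b; rewrite /band_rel /above_rel /= => /and3P[-> /andP[-> _] /andP[-> _]].
pose g x := xchoose (exP x).
have gP x : P x (g x) by apply: xchooseP.
have gM x : M <= dist e s x -> (dist e s (g x) == M) && connect (above_rel e s M) x (g x).
  move=> hx; have := gP x; rewrite /P; case: ifPn => hx2.
    by move=> /eqP ->; rewrite eqn_leq hx hx2 connect0.
  by [].
have gl x : dist e s x <= M -> g x = x by move=> hx; have := gP x; rewrite /P hx => /eqP.
have step x y : above_rel e s k x y -> connect (band_rel e s k M) (g x) (g y).
  rewrite /above_rel /= => /and3P[hxy hx hy].
  have ex1 := dist_edge e_conn s hxy.
  have ex2 : dist e s x <= dist e s y + 1 by apply: (dist_edge e_conn); rewrite e_sym.
  have [[hxM hyM]|hM] : (dist e s x <= M /\ dist e s y <= M) \/ (M <= dist e s x /\ M <= dist e s y) by lia.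
    by rewrite !gl //; apply: connect1; rewrite /band_rel /= hxy hx hy hxM hyM.
  case: hM => mx my.
  have /andP[/eqP gx cx] := gM x mx; have /andP[/eqP gy cy] := gM y my.
  apply: key gx gy _ => //.
  apply: connect_trans (csym (above_sym e_sym s M) cx) _.
  apply: connect_trans (connect1 _) cy.
  by rewrite /above_rel /= hxy mx my.
case/and3P: huv => /eqP hu /eqP hv huv.
have hkM : k <= M by rewrite /M; lia.
rewrite -(gl u) ?hu // -(gl v) ?hv //.
case/connectP: huv => p hp ->.
elim: p u hp {hu} => [|z p IH] x /=; first by rewrite connect0.
case/andP=> hxz hp; apply: connect_trans (step _ _ hxz) (IH _ hp).
Qed.
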